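(* For a positive integer $n$, let $f(n)$ be the maximum value of $\operatorname{Re}\big(\sum_{\xi\in S}\xi\big)$ and $g(n)$ the maximum value of $\big|\sum_{\xi \in S} \xi\big|$, both over all subsets $S$ of the set of $n$-th roots of unity. Then $g(n) = \sqrt{f(n)^2+1}$ if $4 \mid n$, and $g(n) = f(n)$ otherwise. *)

(* Defs.v *)
From HB Require Import structures.
From mathcomp Require Import all_boot all_order all_algebra all_field.
Set Implicit Arguments. Unset Strict Implicit. Unset Printing Implicit Defensive.
Import Order.TTheory GRing.Theory Num.Theory.
Local Open Scope ring_scope.

Definition unity_subset (n : nat) (S : seq algC) : bool :=
  uniq S && all (fun x => x ^+ n == 1) S.

Definition re_sum_values (n : nat) (x : algC) : Prop :=
  exists S, unity_subset n S /\ x = 'Re (\sum_(z <- S) z).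

Definition abs_sum_values (n : nat) (x : algC) : Prop :=
  exists S, unity_subset n S /\ x = `|\sum_(z <- S) z|.

Definition is_max (P : algC -> Prop) (m : algC) : Prop :=
  P m /\ forall x, P x -> x <= m.

(* Main.v *)
Require Import Defs.
From HB Require Import structures.
From mathcomp Require Import all_boot all_order all_algebra all_field.
From mathcomp Require Import ring lra.
Import Order.TTheory GRing.Theory Num.Theory.
Local Open Scope ring_scope.
Set Implicit Arguments. Unset Strict Implicit.


Lemma c_lt1 (c d : algR) : c^+2 + d^+2 = 1 -> 0 < d -> c < 1.
Proof. move=> h d0. rewrite ltNge; apply/negP => h1. nra. Qed.

Lemma LA' (a b c d x y : algR) : 0 < a -> a^+2 + b^+2 = 1 -> c^+2 + d^+2 = 1 -> 0 < d ->
  0 <= y -> c * x + d * y <= x -> b^+2 - a^+2 <= c -> 0 <= a * x + b * y.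
Proof.
move=> a0 ab cd d0 y0 cell h.
have c1 := c_lt1 cd d0.
have x0 : 0 <= x by nra.
rewrite leNgt; apply/negP => hlt.
have yp : 0 < y.
  rewrite lt_neqAle y0 andbT; apply/negP => /eqP y00.
  rewrite -y00 in hlt; nra.
have b0 : b < 0 by nra.
have xp : 0 < x by nra.
(* a x < -b y <= -b x (1-c)/d  => a d < -b (1-c) *)
have h1a : a * x * d < - b * y * d by nra.
have h1b : - b * (d * y) <= - b * ((1 - c) * x) by apply: ler_wpM2l; nra.
have h1 : a * d * x < - b * (1 - c) * x.
  have -> : a * d * x = a * x * d by ring.
  have -> : - b * (1 - c) * x = - b * ((1 - c) * x) by ring.
  apply: (lt_le_trans h1a); have -> : - b * y * d = - b * (d * y) by ring. exact h1b.
have h2 : a * d < - b * (1 - c) by rewrite -(ltr_pM2r xp).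
have h3 : a^+2 * d^+2 < b^+2 * (1-c)^+2.
  have p0 : 0 < a * d by apply: mulr_gt0.
  have q0 : 0 < - b * (1 - c) by apply: lt_trans h2.
  have h2' : 0 < - b * (1 - c) - a * d by rewrite subr_gt0.
  have := mulr_gt0 h2' (addr_gt0 p0 q0). nra.
have h4 : a^+2 * (1 + c) < b^+2 * (1 - c) by nra.
nra.
Qed.

Lemma Poly (c d x y f : algR) : c^+2 + d^+2 = 1 -> 0 < d -> 0 <= y ->
  c * x + d * y <= x -> x <= f -> d = f * (1 - c) -> x^+2 + y^+2 <= f^+2 + 1.
Proof.
move=> cd d0 y0 cell xf df.
have c1 := c_lt1 cd d0.
have f0 : 0 < f by nra.
have x0 : 0 <= x by nra.
have c1' : 0 < 1 - c by rewrite subr_gt0.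
have yx : f * y <= x.
  rewrite -(ler_pM2l c1'); rewrite df in cell.
  have -> : (1 - c) * (f * y) = f * (1 - c) * y by ring.
  have -> : (1 - c) * x = x - c * x by ring.
  by rewrite lerBrDl.
have fy0 : 0 <= f * y by apply: mulr_ge0; [apply: ltW|].
have h1 : f^+2 * y^+2 <= x^+2.
  have s1 : 0 <= x - f * y by rewrite subr_ge0.
  have := mulr_ge0 s1 (addr_ge0 x0 fy0). nra.
have h2 : x^+2 <= f^+2.
  have s1 : 0 <= f - x by rewrite subr_ge0.
  have := mulr_ge0 s1 (addr_ge0 x0 (ltW f0)). nra.
have h3 : y^+2 <= 1.
  rewrite -(ler_pM2l (exprn_gt0 2 f0)) mulr1. nra.
nra.
Qed.

Lemma Opt1 (a b x y : algR) : a^+2 + b^+2 = 1 -> (a+x)^+2 + (b+y)^+2 <= x^+2 + y^+2 ->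
  2 * (a * x + b * y) + 1 <= 0.
Proof. move=> h1 h2; nra. Qed.
Lemma Opt2 (a b x y : algR) : a^+2 + b^+2 = 1 -> (x-a)^+2 + (y-b)^+2 <= x^+2 + y^+2 ->
  1 <= 2 * (a * x + b * y).
Proof. move=> h1 h2; nra. Qed.

Lemma VT (c d p q : algR) : c^+2 + d^+2 = 1 -> 0 < d ->
  c * p - d * (q - 1) = p -> c * (q - 1) + d * p = q + 1 -> q = 0 /\ d = p * (1 - c).
Proof.
move=> cd d0 e1 e2.
have c1 := c_lt1 cd d0.
have f1 : d * (1 - q) = (1 - c) * p.
  lra.
have f2 : d * p = q + 1 - c * (q - 1).
  lra.
have dd : d^+2 = (1 - c) * (1 + c).
  lra.
have e3 : (1 - c) * ((1 + c) * (1 - q)) = (1 - c) * (q + 1 - c * (q - 1)).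
  transitivity (d * (d * (1 - q))); first by rewrite mulrA -expr2 dd; ring.
  by rewrite f1 -f2; ring.
have e4 : (1 + c) * (1 - q) = q + 1 - c * (q - 1).
  apply: (mulfI (x := 1 - c)) => //. by rewrite subr_eq0 gt_eqF.
have q0 : q = 0 by nra.
split=> //. rewrite q0 in e1. nra.
Qed.

Lemma LA (a b c d : algR) : 0 < a -> a^+2 + b^+2 = 1 -> c^+2 + d^+2 = 1 -> 0 < d -> 0 <= c ->
  c * a + d * b <= 0 -> - b <= c -> - b = c /\ a = d.
Proof.
move=> a0 ab cd d0 c0 h1 h2.
have b0 : b <= 0 by nra.
have e1 : -b = c.
  apply/eqP; rewrite eq_le h2 /=.
  rewrite leNgt; apply/negP => hlt.
  have : b^+2 < c^+2 by nra.
  move=> hb; have ad : d < a by nra.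
  nra.
split => //.
have : a^+2 = d^+2 by nra.
move=> h; nra.
Qed.


Definition R_ (x : algC) : algR := in_algR (Creal_Re x).
Definition I_ (x : algC) : algR := in_algR (Creal_Im x).

Lemma roots_list N : (0 < N)%N ->
  {l : seq algC | uniq l & forall x, (x \in l) = (x ^+ N == 1)}.
Proof.
move=> N0; have [z zP] := C_prim_root_exists N0.
exists [seq z ^+ (val i) | i <- enum 'I_N].
- rewrite map_inj_uniq ?enum_uniq // => i j /eqP.
  by rewrite (eq_prim_root_expr zP) !modn_small ?ltn_ord // => /eqP /val_inj.
- move=> x; apply/idP/idP.
  + case/mapP => i _ ->.
    by rewrite -exprM mulnC exprM (prim_expr_order zP) expr1n.
  + move/eqP/(prim_rootP zP) => [i ->]; apply: map_f; by rewrite mem_enum.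
Qed.

Lemma root_norm N (x : algC) : (0 < N)%N -> x ^+ N = 1 -> `|x| = 1.
Proof.
move=> N0 h; apply/eqP; rewrite -(pexpr_eq1 N0) ?normr_ge0 //.
by rewrite -normrX h normr1.
Qed.

Lemma RI1 x : `|x| = 1 -> R_ x ^+2 + I_ x ^+2 = 1.
Proof.
move=> h; apply: val_inj; change ('Re x ^+ 2 + 'Im x ^+ 2 = 1).
by rewrite -normC2_Re_Im h expr1n.
Qed.

Lemma eqC (x y : algC) : 'Re x = 'Re y -> 'Im x = 'Im y -> x = y.
Proof. by move=> h1 h2; rewrite [x]algCrect [y]algCrect h1 h2. Qed.

Lemma RM x y : R_ (x * y) = R_ x * R_ y - I_ x * I_ y.
Proof. apply: val_inj; exact: ReM. Qed.
Lemma IM x y : I_ (x * y) = R_ x * I_ y + R_ y * I_ x.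
Proof. apply: val_inj; exact: ImM. Qed.
Lemma RD x y : R_ (x + y) = R_ x + R_ y.
Proof. apply: val_inj; exact: raddfD. Qed.
Lemma ID x y : I_ (x + y) = I_ x + I_ y.
Proof. apply: val_inj; exact: raddfD. Qed.
Lemma RN x : R_ (- x) = - R_ x.
Proof. apply: val_inj; exact: raddfN. Qed.
Lemma IN x : I_ (- x) = - I_ x.
Proof. apply: val_inj; exact: raddfN. Qed.
Lemma RB x y : R_ (x - y) = R_ x - R_ y.
Proof. by rewrite RD RN. Qed.
Lemma IB x y : I_ (x - y) = I_ x - I_ y.
Proof. by rewrite ID IN. Qed.
Lemma Rc x : R_ x^* = R_ x.
Proof. apply: val_inj; exact: Re_conj. Qed.
Lemma Ic x : I_ x^* = - I_ x.
Proof. apply: val_inj; exact: Im_conj. Qed.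
Lemma Ri : R_ 'i = 0.
Proof. apply: val_inj; exact: Re_i. Qed.
Lemma Ii : I_ 'i = 1.
Proof. apply: val_inj; exact: Im_i. Qed.
Lemma R1 : R_ 1 = 1.
Proof. apply: val_inj; apply/Creal_ReP; exact: real1. Qed.
Lemma I1 : I_ 1 = 0.
Proof. apply: val_inj; apply/Creal_ImP; exact: real1. Qed.
Lemma eqC' x y : R_ x = R_ y -> I_ x = I_ y -> x = y.
Proof. by move=> h1 h2; apply: eqC; [exact: (congr1 val h1)|exact: (congr1 val h2)]. Qed.
Lemma normRI x : `|x| ^+ 2 = val (R_ x ^+ 2 + I_ x ^+ 2).
Proof. by rewrite normC2_Re_Im. Qed.

Lemma ex_max (T : eqType) (F : T -> algR) (s : seq T) : s != [::] ->
  exists2 x, x \in s & forall y, y \in s -> F y <= F x.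
Proof.
elim: s => // a s IH _.
case: (eqVneq s [::]) => [->|sn].
  exists a; first by rewrite inE eqxx.
  by move=> y; rewrite inE => /eqP ->.
have [m ms mM] := IH sn.
case: (leP (F a) (F m)) => h.
  exists m; first by rewrite inE ms orbT.
  by move=> y; rewrite inE => /orP [/eqP ->|/mM].
exists a; first by rewrite inE eqxx.
move=> y; rewrite inE => /orP [/eqP ->//|/mM hy]. exact: le_trans hy (ltW h).
Qed.
Section Sub.
Variable n : nat.
Hypothesis n0 : (0 < n)%N.
Variable l : seq algC.
Hypothesis luniq : uniq l.
Hypothesis lmem : forall x, (x \in l) = (x ^+ n == 1).

Lemma root_neq0 (r : algC) : r ^+ n = 1 -> r != 0.
Proof.
move=> rn; apply/eqP => r0; move: rn; rewrite r0 expr0n (gtn_eqF n0) /= => /eqP.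
by rewrite eq_sym oner_eq0.
Qed.

Lemma us_rot r S : r ^+ n = 1 -> unity_subset n S ->
  unity_subset n (map (fun x => r * x) S) /\
  \sum_(z <- map (fun x => r * x) S) z = r * \sum_(z <- S) z.
Proof.
move=> rn /andP [uS aS]; have r0 := @root_neq0 r rn.
split; last by rewrite big_map mulr_sumr.
rewrite /unity_subset map_inj_uniq ?uS; last exact: mulfI.
rewrite all_map; apply/allP => x xS /=.
by rewrite exprMn rn mul1r; exact: (allP aS).
Qed.

Lemma us_conj S : unity_subset n S ->
  unity_subset n (map (fun x : algC => x^*) S) /\
  \sum_(z <- map (fun x : algC => x^*) S) z = (\sum_(z <- S) z)^*.
Proof.
move=> /andP [uS aS]; split; last by rewrite big_map rmorph_sum.
rewrite /unity_subset map_inj_uniq ?uS; last exact: (can_inj conjCK).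
rewrite all_map; apply/allP => x xS /=.
by rewrite -rmorphXn (eqP (allP aS x xS)) rmorph1.
Qed.

Lemma us_cons x S : x ^+ n = 1 -> x \notin S -> unity_subset n S ->
  unity_subset n (x :: S) /\ \sum_(z <- x :: S) z = x + \sum_(z <- S) z.
Proof.
move=> xn xS /andP [uS aS]; split; last by rewrite big_cons.
by rewrite /unity_subset /= xS uS xn eqxx aS.
Qed.

Lemma us_rem x S : x \in S -> unity_subset n S ->
  unity_subset n (rem x S) /\ \sum_(z <- S) z = x + \sum_(z <- rem x S) z.
Proof.
move=> xS /andP [uS aS]; split; last by rewrite (perm_big _ (perm_to_rem xS)) big_cons.
rewrite /unity_subset rem_uniq //=; apply/allP => y /mem_rem; exact: (allP aS).
Qed.

Lemma sum_l0 : (1 < n)%N -> \sum_(z <- l) z = 0.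
Proof.
move=> n1; have [w wP] := C_prim_root_exists n0.
have w1 : w != 1.
  have := eq_prim_root_expr wP 1 0; rewrite expr1 expr0 => ->.
  by rewrite modn_small // mod0n.
have wn : w ^+ n = 1 := prim_expr_order wP.
have w0 := @root_neq0 w wn.
have pe : perm_eq l (map (fun x => w * x) l).
  apply: uniq_perm => //; first by rewrite map_inj_uniq //; apply: mulfI.
  move=> x; rewrite -{2}[x](mulVKf w0) mem_map; last exact: mulfI.
  by rewrite !lmem exprMn exprVn wn invr1 mul1r.
have e : \sum_(z <- l) z = w * \sum_(z <- l) z.
  by rewrite {1}(perm_big _ pe) big_map mulr_sumr.
have : (w - 1) * \sum_(z <- l) z = 0 by rewrite mulrBl -e mul1r subrr.
by move/eqP; rewrite mulf_eq0 subr_eq0 (negbTE w1) /= => /eqP.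
Qed.

Lemma us_compl S : (1 < n)%N -> unity_subset n S ->
  exists S', unity_subset n S' /\ \sum_(z <- S') z = - \sum_(z <- S) z.
Proof.
move=> n1 /andP [uS aS]; exists [seq x <- l | x \notin S]; split.
  rewrite /unity_subset filter_uniq //=; apply/allP => x.
  by rewrite mem_filter lmem => /andP [_ ->].
have pe : perm_eq l (S ++ [seq x <- l | x \notin S]).
  apply: uniq_perm => //.
    rewrite cat_uniq uS filter_uniq // andbT /=.
    by apply/hasPn => x; rewrite mem_filter => /andP [].
  move=> x; rewrite mem_cat mem_filter; case xS: (x \in S) => //=.
  by rewrite lmem; exact: (allP aS).
have e := sum_l0 n1; rewrite (perm_big _ pe) big_cat /= in e.
by apply/eqP; rewrite -addr_eq0 addrC e.
Qed.


Definition W (x : algC) := (x ^+ n == 1) || ((- x) ^+ n == 1).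

Lemma W_mul x y : W x -> W y -> W (x * y).
Proof.
rewrite /W => /orP [] /eqP hx /orP [] /eqP hy.
- by rewrite !exprMn hx hy !mul1r eqxx.
- by rewrite -mulrN !exprMn hx hy !mul1r eqxx orbT.
- by rewrite -mulNr !exprMn hx hy !mul1r eqxx orbT.
- by rewrite -mulrNN !exprMn hx hy !mul1r eqxx.
Qed.

Lemma W_opp x : W x -> W (- x).
Proof. by rewrite /W opprK orbC. Qed.

Lemma W_conj x : W x -> W x^*.
Proof.
rewrite /W -rmorphN -!rmorphXn => /orP [] /eqP ->; by rewrite rmorph1 eqxx ?orbT.
Qed.

Lemma W_U x : x ^+ n = 1 -> W x.
Proof. by rewrite /W => ->; rewrite eqxx. Qed.

Lemma W_norm x : W x -> `|x| = 1.
Proof.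
rewrite /W => /orP [] /eqP h; first exact: root_norm h.
by rewrite -normrN; exact: root_norm h.
Qed.

Lemma W_2n x : W x -> x ^+ (n * 2) = 1.
Proof.
rewrite /W => /orP [] /eqP h; first by rewrite exprM h expr1n.
by rewrite mulnC exprM -sqrrN -exprM mulnC exprM h expr1n.
Qed.

Lemma W_even x : ~~ odd n -> W x -> x ^+ n = 1.
Proof.
move=> ev; rewrite /W => /orP [] /eqP h //.
by rewrite -h exprNn -signr_odd (negbTE ev) expr0 mul1r.
Qed.

Lemma W_sum r S : (1 < n)%N -> W r -> unity_subset n S ->
  exists S', unity_subset n S' /\ \sum_(z <- S') z = r * \sum_(z <- S) z.
Proof.
move=> n1 /orP [] /eqP rn uS.
  have [u e] := us_rot rn uS; by exists (map (fun x => r * x) S).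
have [u e] := us_rot rn uS.
have [S' [u' e']] := us_compl n1 u.
by exists S'; split => //; rewrite e' e mulNr opprK.
Qed.

Lemma ex_eta r0 : W r0 -> r0 != 1 -> r0 != -1 ->
  exists eta, [/\ W eta, eta != 1, 0 < I_ eta &
    forall r, W r -> r != 1 -> R_ r <= R_ eta].
Proof.
move=> Wr0 r01 r0m1.
have n2 : (0 < n * 2)%N by rewrite muln_gt0 n0.
have [l2 l2u l2m] := roots_list n2.
pose L := [seq x <- l2 | W x && (x != 1)].
have r0L : r0 \in L by rewrite mem_filter Wr0 r01 l2m (W_2n Wr0) eqxx.
have Ln : L != [::] by move: r0L; case: L.
have [e0 e0L e0M] := ex_max R_ Ln.
move: e0L; rewrite mem_filter => /andP [/andP [We0 e01] _].
have M : forall r, W r -> r != 1 -> R_ r <= R_ e0.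
  by move=> r Wr r1; apply: e0M; rewrite mem_filter Wr r1 l2m (W_2n Wr) eqxx.
case: (ltgtP (I_ e0) 0) => hI.
- exists e0^*; split.
  + exact: W_conj.
  + by apply: contra e01 => /eqP h; rewrite -(conjCK e0) h rmorph1.
  + by rewrite Ic oppr_gt0.
  + by move=> r Wr r1; rewrite Rc; exact: M.
- by exists e0; split.
- exfalso.
  have u0 := RI1 (W_norm We0).
  have Rm1 : R_ e0 = -1.
    have : (R_ e0 - 1) * (R_ e0 + 1) = 0 by rewrite hI in u0; nra.
    move/eqP; rewrite mulf_eq0 => /orP [|]; last by rewrite addr_eq0 => /eqP.
    rewrite subr_eq0 => /eqP h.
    have e1 : e0 = 1 by apply: eqC'; [rewrite h R1 | rewrite hI I1].
    by rewrite e1 eqxx in e01.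
  have := M r0 Wr0 r01; rewrite Rm1 => hr.
  have u1 := RI1 (W_norm Wr0).
  have hR : R_ r0 = -1 by nra.
  have hI' : I_ r0 = 0 by nra.
  have e1 : r0 = -1 by apply: eqC'; [rewrite hR RN R1 | rewrite hI' IN I1 oppr0].
  by rewrite e1 eqxx in r0m1.
Qed.

Lemma mem_us S x : unity_subset n S -> x \in S -> x ^+ n = 1.
Proof. by move=> /andP [_ aS] xS; apply/eqP; exact: (allP aS). Qed.

Lemma Re_le_norm (z : algC) : 'Re z <= `|z|.
Proof. exact: le_trans (real_ler_norm (Creal_Re z)) (leif_normC_Re_Creal z).1. Qed.

Lemma sq_le (a b : algC) : 0 <= a -> a <= b -> a ^+ 2 <= b ^+ 2.
Proof. move=> a0 ab; apply: lerXn2r; rewrite ?nnegrE //; exact: le_trans ab. Qed.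

Lemma rot_cell g eta : (1 < n)%N -> W eta -> is_max (abs_sum_values n) g ->
  exists S2, [/\ unity_subset n S2, `|\sum_(z <- S2) z| = g,
     0 <= I_ (\sum_(z <- S2) z) &
     R_ (eta^* * \sum_(z <- S2) z) <= R_ (\sum_(z <- S2) z)].
Proof.
move=> n1 Weta [[Sg [uSg eg]] gM].
pose s := \sum_(z <- Sg) z.
have n2 : (0 < n * 2)%N by rewrite muln_gt0 n0.
have [l2 l2u l2m] := roots_list n2.
pose L := [seq x <- l2 | W x].
have W1 : W 1 by rewrite /W expr1n eqxx.
have oneL : 1 \in L by rewrite mem_filter W1 l2m expr1n eqxx.
have Ln : L != [::] by move: oneL; case: L.
have [r rL rM] := ex_max (fun r => R_ (r * s)) Ln.
move: rL; rewrite mem_filter => /andP [Wr _].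
have M : forall w, W w -> R_ (w * s) <= R_ (r * s).
  by move=> w Ww; apply: rM; rewrite mem_filter Ww l2m (W_2n Ww) eqxx.
have [S1 [uS1 e1]] := W_sum n1 Wr uSg.
case: (ltP (I_ (r * s)) 0) => hI.
- have [uS2 e2] := us_conj uS1.
  exists (map (fun x : algC => x^*) S1); split => //; rewrite e2 e1.
  + by rewrite norm_conjC normrM (W_norm Wr) mul1r eg.
  + rewrite Ic oppr_ge0; exact: ltW hI.
  + rewrite -[_ * _^*]rmorphM Rc Rc mulrA; apply: M.
    exact: W_mul.
- exists S1; split => //; rewrite e1 //.
  by rewrite normrM (W_norm Wr) mul1r eg.
  by rewrite mulrA; apply: M; apply: W_mul => //; exact: W_conj.
Qed.

Lemma partA f g : (1 < n)%N -> ~~ (4 %| n)%N ->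
  (exists r0, [/\ W r0, r0 != 1 & r0 != -1]) ->
  is_max (re_sum_values n) f -> is_max (abs_sum_values n) g -> g <= f.
Proof.
move=> n1 n4 [r0 [Wr0 r01 r0m1]] hf hg.
have [eta [Weta eta1 Ieta etaM]] := ex_eta Wr0 r01 r0m1.
have [S2 [uS2 nS2 It cell]] := rot_cell n1 Weta hg.
move: hf hg => [[Sf [uSf ef]] fM] [[Sg [uSg eg]] gM].
set t := \sum_(z <- S2) z in nS2 It cell.
have ueta := RI1 (W_norm Weta).
have c1 := c_lt1 ueta Ieta.
have cellR : R_ eta * R_ t + I_ eta * I_ t <= R_ t.
  by move: cell; rewrite RM Rc Ic mulNr opprK.
have opt_out : forall xi, xi ^+ n = 1 -> xi \notin S2 ->
    2 * (R_ xi * R_ t + I_ xi * I_ t) + 1 <= 0.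
  move=> xi xin xiS.
  have [u e] := us_cons xin xiS uS2.
  have h : `|xi + t| <= g by apply: gM; exists (xi :: S2); split => //; rewrite e.
  have h2 : `|xi + t| ^+ 2 <= `|t| ^+ 2 by apply: sq_le; rewrite ?normr_ge0 // nS2.
  rewrite !normRI in h2.
  have h3 : (R_ xi + R_ t)^+2 + (I_ xi + I_ t)^+2 <= R_ t ^+2 + I_ t ^+2.
    by rewrite -RD -ID; exact: h2.
  exact: Opt1 (RI1 (root_norm n0 xin)) h3.
have opt_in : forall xi, xi \in S2 -> 1 <= 2 * (R_ xi * R_ t + I_ xi * I_ t).
  move=> xi xiS.
  have xin := mem_us uS2 xiS.
  have [u e] := us_rem xiS uS2.
  have h : `|t - xi| <= g.
    apply: gM; exists (rem xi S2); split => //.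
    by rewrite /t e [xi + _]addrC addrK.
  have h2 : `|t - xi| ^+ 2 <= `|t| ^+ 2 by apply: sq_le; rewrite ?normr_ge0 // nS2.
  rewrite !normRI in h2.
  have h3 : (R_ t - R_ xi)^+2 + (I_ t - I_ xi)^+2 <= R_ t ^+2 + I_ t ^+2.
    by rewrite -RB -IB; exact: h2.
  exact: Opt2 (RI1 (root_norm n0 xin)) h3.
have half : forall xi, W xi -> 0 < R_ xi -> 0 <= R_ xi * R_ t + I_ xi * I_ t.
  move=> xi Wxi a0.
  have uxi := RI1 (W_norm Wxi).
  have Wm : W (- (xi * xi)) by apply/W_opp/W_mul.
  have m1 : - (xi * xi) != 1.
    apply/eqP => h; have : R_ (- (xi * xi)) = 1 by rewrite h R1.
    rewrite RN RM => h'; nra.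
  have := etaM _ Wm m1; rewrite RN RM => hc.
  apply: (LA' a0 uxi ueta Ieta It cellR); nra.
have Rnz : forall xi, xi ^+ n = 1 -> R_ xi != 0.
  move=> xi xin; apply/eqP => a0.
  have uxi := RI1 (root_norm n0 xin).
  rewrite a0 in uxi.
  have sq : xi ^+ 2 = -1.
    apply: eqC'; rewrite expr2 ?RM ?IM ?RN ?R1 ?IN ?I1 a0.
      nra.
    by rewrite !mul0r addr0 oppr0.
  have x4 : xi ^+ 4 = 1 by rewrite (_ : 4 = 2 * 2)%N // exprM sq sqrrN expr1n.
  have e : xi ^+ (n %% 4)%N = 1.
    by move: xin; rewrite {1}(div.divn_eq n 4) exprD mulnC exprM x4 expr1n mul1r.
  have hm : (n %% 4 < 4)%N by rewrite ltn_mod.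
  move: hm n4 e; rewrite /dvdn; case: (n %% 4)%N => [|[|[|[|?]]]] //= _ _.
  - rewrite expr1 => e1; move: a0; rewrite e1 R1 => h; lra.
  - rewrite sq => e1; have := congr1 R_ e1; rewrite RN R1 => h; lra.
  - rewrite exprS sq mulrN1 => e1; have := congr1 R_ e1; rewrite RN a0 R1 => h; lra.
have memS : forall xi, xi ^+ n = 1 -> (xi \in S2) = (0 < R_ xi).
  move=> xi xin; apply/idP/idP.
  - move=> xiS; rewrite ltNge; apply/negP => hle.
    have hlt : R_ xi < 0 by rewrite lt_neqAle hle Rnz.
    have := half (- xi) (W_opp (W_U xin)); rewrite RN IN oppr_gt0 => /(_ hlt) h.
    have := opt_in xi xiS; nra.
  - move=> a0; case xiS: (xi \in S2) => //.
    have := opt_out xi xin (negbT xiS); have := half xi (W_U xin) a0; nra.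
have pe : perm_eq S2 (map (fun x : algC => x^*) S2).
  have [uc _] := us_conj uS2.
  apply: uniq_perm; [by case/andP: uS2 | by case/andP: uc |] => x.
  rewrite -{2}(conjCK x) mem_map; last exact: (can_inj conjCK).
  case xn: (x ^+ n == 1).
  - have xcn : x^* ^+ n = 1 by rewrite -rmorphXn (eqP xn) rmorph1.
    by rewrite (memS _ (eqP xn)) (memS _ xcn) Rc.
  - have h1 : x \notin S2.
      by apply: contraFN xn => /(mem_us uS2) ->; rewrite eqxx.
    have h2 : x^* \notin S2.
      apply: contraFN xn => /(mem_us uS2) h.
      by rewrite -(conjCK x) -rmorphXn h rmorph1 eqxx.
    by rewrite (negbTE h1) (negbTE h2).
have tc : t = t^*.
  have [_ e] := us_conj uS2; rewrite /t -e; exact: perm_big pe.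
have It0 : I_ t = 0.
  have : I_ t = I_ t^* by rewrite -tc.
  rewrite Ic => h; lra.
have x0 : 0 <= R_ t by rewrite It0 in cellR; nra.
have It0' : 'Im t = 0 := congr1 val It0.
have nt : `|t| = 'Re t by rewrite normC_Re_Im It0' expr0n /= addr0 sqrCK.
rewrite -nS2 nt; apply: fM; by exists S2.
Qed.

Lemma R0 : R_ 0 = 0.
Proof. apply: val_inj; exact: raddf0. Qed.

Lemma Rsum (s : seq algC) : R_ (\sum_(z <- s) z) = \sum_(z <- s) R_ z.
Proof. elim: s => [|a s IH]; first by rewrite !big_nil R0. by rewrite !big_cons RD IH. Qed.

Lemma Ropt S : unity_subset n S ->
  R_ (\sum_(z <- S) z) <= R_ (\sum_(z <- [seq x <- l | 0 < R_ x]) z).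
Proof.
move=> uS; rewrite !Rsum big_filter.
pose F z := if 0 < R_ z then R_ z else 0.
have F0 : forall z, 0 <= F z by move=> z; rewrite /F; case: ltP => h //; exact: ltW.
apply: (le_trans (y := \sum_(z <- S) F z)).
  by apply: ler_sum => z _; rewrite /F; case: ltP.
have pe : perm_eq S [seq z <- l | z \in S].
  apply: uniq_perm; [by case/andP: uS | exact: filter_uniq |] => z.
  rewrite mem_filter; case zS: (z \in S) => //=.
  by rewrite lmem (mem_us uS zS) eqxx.
rewrite (perm_big _ pe) big_filter [X in _ <= X]big_mkcond /= [X in X <= _]big_mkcond /=.
apply: ler_sum => z _; case: (z \in S); rewrite /F; case: ltP => h //.
exact: ltW.
Qed.

Lemma partB f g : (4 %| n)%N -> is_max (re_sum_values n) f -> is_max (abs_sum_values n) g ->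
  g = sqrtC (f ^+ 2 + 1).
Proof.
move=> n4 hf hg.
have n1 : (1 < n)%N by apply: leq_trans _ (dvdn_leq n0 n4).
have ev : ~~ odd n by rewrite -dvdn2; exact: dvdn_trans _ n4.
have i4 : 'i ^+ 4 = 1 :> algC by rewrite (_ : 4 = 2 * 2)%N // exprM sqrCi sqrrN expr1n.
have inn : 'i ^+ n = 1 :> algC by case/dvdnP: n4 => k ->; rewrite mulnC exprM i4 expr1n.
have Wi : W 'i := W_U inn.
have minn : (- 'i) ^+ n = 1 :> algC := W_even ev (W_opp Wi).
have i1 : 'i != 1 :> algC.
  by apply/eqP => h; have := congr1 R_ h; rewrite Ri R1 => /eqP; rewrite eq_sym oner_eq0.
have im1 : 'i != -1 :> algC.
  by apply/eqP => h; have := congr1 R_ h; rewrite Ri RN R1 => /eqP; rewrite eq_sym oppr_eq0 oner_eq0.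
have [eta [Weta eta1 Ieta etaM]] := ex_eta Wi i1 im1.
have etan : eta ^+ n = 1 := W_even ev Weta.
have eta0 : eta != 0 := @root_neq0 eta etan.
have ueta := RI1 (W_norm Weta).
have c1 := c_lt1 ueta Ieta.
have c0 : 0 <= R_ eta by have := etaM _ Wi i1; rewrite Ri.
have ee : eta^* * eta = 1 by rewrite -normCKC (W_norm Weta) expr1n.
have LAc : forall xi, xi ^+ n = 1 -> 0 < R_ xi -> R_ (eta^* * xi) <= 0 -> 'i * xi = eta.
  move=> xi xin a0 h.
  have uxi := RI1 (root_norm n0 xin).
  move: h; rewrite RM Rc Ic mulNr opprK => h.
  have Wix : W ('i * xi) by apply: W_mul => //; apply: W_U.
  have ix1 : 'i * xi != 1.
    apply/eqP => e; have := congr1 R_ e; rewrite RM Ri Ii R1 mul0r mul1r sub0r => hb.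
    suff : (0:algR) < 0 by rewrite ltxx.
    nra.
  have hb := etaM _ Wix ix1; rewrite RM Ri Ii mul0r mul1r sub0r in hb.
  have [e1 e2] := LA a0 uxi ueta Ieta c0 h hb.
  apply: eqC'; first by rewrite RM Ri Ii mul0r mul1r sub0r.
  by rewrite IM Ri Ii mul0r add0r mulr1.
have iim : 'i * - 'i = 1 :> algC by rewrite mulrN -expr2 sqrCi opprK.
have LB : forall x, x ^+ n = 1 ->
    ((0 < R_ (eta * x)) || (eta * x == 'i)) = ((0 < R_ x) || (x == - 'i)).
  move=> x xn; apply/idP/idP.
  - case/orP => [hp | /eqP he].
    + case: (boolP (0 < R_ x)) => //= hx.
      have yn : (eta * x) ^+ n = 1 by rewrite exprMn etan xn mul1r.
      have := LAc _ yn hp; rewrite mulrA ee mul1r leNgt hx => /(_ isT) e.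
      rewrite mulrCA -{2}[eta]mulr1 in e; move/(mulfI eta0): e => e.
      by apply/eqP; rewrite -[x]mul1r -iim [_ * - 'i]mulrC -mulrA e mulr1.
    + have hx : x = eta^* * 'i by rewrite -he mulrA ee mul1r.
      by rewrite hx RM Rc Ic Ri Ii mulr0 mulr1 sub0r opprK Ieta.
  - case/orP => [hx | /eqP ->].
    + case: (boolP (0 < R_ (eta * x))) => //= hp.
      have xcn : x^* ^+ n = 1 by rewrite -rmorphXn xn rmorph1.
      have := LAc _ xcn; rewrite Rc => /(_ hx); rewrite -rmorphM Rc leNgt hp => /(_ isT) e.
      have e' : - 'i * x = eta^* by rewrite -e rmorphM /= conjCK conjCi.
      apply/eqP; apply: (mulfI (x := eta^*)); first by rewrite conjC_eq0.
      by rewrite mulrA ee mul1r -e' mulrC mulrA iim mul1r.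
    + by rewrite mulrN RN RM Ri Ii mulr0 mulr1 sub0r opprK Ieta.
pose T := [seq x <- l | 0 < R_ x].
have uT : unity_subset n T.
  rewrite /unity_subset filter_uniq //=; apply/allP => x.
  by rewrite mem_filter lmem => /andP [_ ->].
have mi : 'i \notin T by rewrite mem_filter Ri ltxx.
have mmi : - 'i \notin T by rewrite mem_filter RN Ri oppr0 ltxx.
have pe : perm_eq (map (fun x => eta * x) (- 'i :: T)) ('i :: T).
  apply: uniq_perm.
  - rewrite map_inj_uniq; last exact: mulfI.
    by rewrite /= mmi filter_uniq.
  - by rewrite /= mi filter_uniq.
  move=> x; have [y ->] : exists y, x = eta * y by exists (eta^-1 * x); rewrite mulVKf.
  rewrite mem_map; last exact: mulfI.
  rewrite !in_cons !mem_filter !lmem exprMn etan mul1r.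
  case yn: (y ^+ n == 1); rewrite ?andbT ?andbF ?orbF.
  - by rewrite orbC [RHS]orbC LB // (eqP yn).
  - have h1 : y != - 'i by apply: contraFneq yn => ->; rewrite minn eqxx.
    have h2 : eta * y != 'i.
      apply: contraFneq yn => e.
      by rewrite -(mul1r (y ^+ n)) -{1}etan -exprMn e inn eqxx.
    by rewrite (negbTE h1) (negbTE h2).
have e : \sum_(z <- map (fun x => eta * x) (- 'i :: T)) z = \sum_(z <- 'i :: T) z.
  exact: perm_big pe.
rewrite big_map -mulr_sumr !big_cons in e.
set sT := \sum_(z <- T) z in e.
have eR := congr1 R_ e; have eI := congr1 I_ e.
rewrite RM RD ID RN IN Ri Ii oppr0 add0r RD Ri add0r in eR.
rewrite IM RD ID RN IN Ri Ii oppr0 add0r ID Ii in eI.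
have [q0 dp] : I_ sT = 0 /\ I_ eta = R_ sT * (1 - R_ eta).
  apply: VT => //.
    by rewrite -[in RHS]eR; ring.
  by rewrite [RHS]addrC -eI; ring.
move: hf hg => [[Sf [uSf ef]] fM] [[Sg [uSg eg]] gM].
have fT : f = 'Re sT.
  apply/le_anti/andP; split.
    by rewrite ef; exact: (Ropt uSf).
  by apply: fM; exists T.
have [u2 e2] := us_cons inn mi uT.
have lo : `|'i + sT| <= g by apply: gM; exists ('i :: T); split => //; rewrite e2.
have [S2 [uS2 nS2 It cell]] := rot_cell n1 Weta (conj (ex_intro _ Sg (conj uSg eg)) gM).
set t := \sum_(z <- S2) z in nS2 It cell.
have cellR : R_ eta * R_ t + I_ eta * I_ t <= R_ t.
  by move: cell; rewrite RM Rc Ic mulNr opprK.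
have xf : R_ t <= R_ sT by apply: (le_trans _ (_ : f <= _)); [apply: fM; exists S2 | rewrite fT].
have up := Poly ueta Ieta It cellR xf dp.
have g0 : 0 <= g by rewrite -nS2 normr_ge0.
have g2 : g ^+ 2 = 'Re sT ^+ 2 + 1.
  apply/le_anti/andP; split.
    rewrite -nS2 normRI; exact: up.
  have := sq_le (normr_ge0 _) lo; rewrite normRI => h.
  have E : R_ ('i + sT) ^+ 2 + I_ ('i + sT) ^+ 2 = R_ sT ^+ 2 + 1.
    by rewrite RD ID Ri Ii q0 add0r addr0 expr1n.
  by move: h; rewrite E.
by rewrite fT -g2 sqrCK.
Qed.

End Sub.

Unset Implicit Arguments.
Theorem lemma3p10 (n : nat) (f g : algC) :
  (0 < n)%N ->
  is_max (re_sum_values n) f ->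
  is_max (abs_sum_values n) g ->
  g = (if (4 %| n)%N then sqrtC (f ^+ 2 + 1) else f).
Proof.
move=> n0 hf hg.
have [l lu lm] := roots_list n0.
case: ifP => n4; first exact: (partB n0 lu lm n4 hf hg).
have ge : f <= g.
  case: hf => [[Sf [uSf ef]] _]; case: hg => [_ gM].
  rewrite ef; apply: le_trans (Re_le_norm _) _; apply: gM; by exists Sf.
apply/le_anti/andP; split => //.
case: (ltnP 2 n) => n2.
  have [w wP] := C_prim_root_exists n0.
  have wn := prim_expr_order wP.
  apply: (partA n0 lu lm (ltnW n2) (negbT n4) _ hf hg).
  exists w; split; first exact: W_U.
    have := eq_prim_root_expr wP 1 0; rewrite expr1 expr0 => ->.
    by rewrite modn_small ?mod0n // ltnW.
  apply/eqP => wm; have := eq_prim_root_expr wP 2 0.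
  by rewrite expr0 wm sqrrN expr1n eqxx modn_small // mod0n.
case: hg => [[S0 [uS0 e0]] _]; case: hf => [_ fM].
have f1 : 1 <= f.
  apply: fM; exists [:: 1]; split; first by rewrite /unity_subset /= expr1n eqxx.
  by rewrite big_seq1; symmetry; exact: (congr1 val R1).
apply: le_trans f1.
have n12 : (n == 1)%N || (n == 2)%N by move: n0 n2; case: (n) => [|[|[|]]].
have pm : forall x, x \in S0 -> x \in [:: 1; -1].
  move=> x xS; have xn := mem_us uS0 xS.
  have x2 : x ^+ 2 = 1.
    case/orP: n12 => /eqP nE; rewrite nE in xn => //.
    by rewrite expr1 in xn; rewrite xn expr1n.
  by move/eqP: x2; rewrite sqrf_eq1 !inE.
have u1 : uniq [:: 1; -1 : algC].
  rewrite /= inE andbT; apply/eqP => h; have := congr1 R_ h; rewrite RN R1 => h'.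
  suff : (0:algR) < 0 by rewrite ltxx.
  lra.
have pe : perm_eq S0 [seq x <- [:: 1; -1] | x \in S0].
  apply: uniq_perm; [by case/andP: uS0 | exact: filter_uniq |] => x.
  rewrite mem_filter; case xS: (x \in S0) => //=; by rewrite pm.
rewrite e0 (perm_big _ pe) /=.
case: (1 \in S0); case: (-1 \in S0);
  by rewrite ?big_cons ?big_nil ?addr0 ?addrN ?normr0 ?normrN ?normr1 ?ler01 ?lexx.
Qed.
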